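(* Fix a client $k$, an iteration $t$ and a constant $\kappa>0$, and suppose $\texttt{EI}_k^{(t)}(\bm{x}_k^{(t)\mathrm{new}})\ge\kappa$ and $\sigma_k^{(t)}(\bm{x})\le 1$ for all $\bm{x}$. Let $C=\log\left[\frac{1}{2\pi\kappa^2}\right]$. If $y_k^{*(t)}-\mu_k^{(t)}(\bm{x}_k^{(t)\mathrm{new}})\ge 0$, then $y_k^{*(t)}-\mu_k^{(t)}(\bm{x}_k^{(t)\mathrm{new}})\le\sigma_k^{(t)}(\bm{x}_k^{(t)\mathrm{new}})\sqrt{C}$. Furthermore, $\tau(-z_k^{(t)}(\bm{x}_k^{(t)\mathrm{new}}))\le 1+\sqrt{C}$.
   Context: Client $k$ has noisy data with responses $\bm{y}_k^{(t)}$ at iteration $t$, $y_k^{*(t)}=\max\bm{y}_k^{(t)}$, and $\mu_k^{(t)},\sigma_k^{(t)}>0$ are Gaussian-process posterior mean and standard deviation. $z_k^{(t)}(\bm{x})=\frac{\mu_k^{(t)}(\bm{x})-y_k^{*(t)}}{\sigma_k^{(t)}(\bm{x})}$, $\tau(z)=z\Phi(z)+\phi(z)$ with $\phi,\Phi$ the standard normal pdf and cdf, and $\texttt{EI}_k^{(t)}(\bm{x})=\sigma_k^{(t)}(\bm{x})\tau(z_k^{(t)}(\bm{x}))$ is the expected improvement. $\bm{x}_k^{(t)\mathrm{new}}$ is any design point (in the paper, the consensus design of client $k$ at iteration $t$). The algorithm stops at iteration $t$ if the expected improvement falls below $\kappa$, so the hypothesis $\texttt{EI}_k^{(t)}(\bm{x}_k^{(t)\mathrm{new}})\ge\kappa$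 means the algorithm has not stopped. *)

(* Defs.v *)
From HB Require Import structures.
From mathcomp Require Import all_boot all_order all_algebra.
From mathcomp Require Import all_classical all_reals all_analysis.
Set Implicit Arguments. Unset Strict Implicit. Unset Printing Implicit Defensive.
Import Order.TTheory GRing.Theory Num.Theory.
Local Open Scope classical_set_scope.
Local Open Scope ring_scope.

Definition std_phi {R : realType} (z : R) : R := normal_pdf 0 1 z.
Definition std_Phi {R : realType} (z : R) : R :=
  fine (normal_prob (0:R) 1 `]-oo, z]).

Definition tau {R : realType} (z : R) : R := z * std_Phi z + std_phi z.

Definition ystar {R : realType} (n : nat) (y : 'I_(n.+1) -> R) : R :=
  \big[Num.max/y ord0]_(i < n.+1) y i.

Definition zscore {R : realType} {X : Type} (mu sigma : X -> R) (ys : R) (x : X) : R :=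
  (mu x - ys) / sigma x.

Definition EI {R : realType} {X : Type} (mu sigma : X -> R) (ys : R) (x : X) : R :=
  sigma x * tau (zscore mu sigma ys x).

(* Main.v *)
Require Import Defs.
From HB Require Import structures.
From mathcomp Require Import all_boot all_order all_algebra.
From mathcomp Require Import all_classical all_reals all_analysis.
From mathcomp Require Import lra.
Set Implicit Arguments.
Import Order.TTheory GRing.Theory Num.Theory.
Local Open Scope ring_scope.

Lemma fine01 (R : realType) (x : \bar R) : (0 <= x)%E -> (x <= 1)%E -> 0 <= fine x <= 1.
Proof. by case: x => [r| |] //=; rewrite !lee_fin => -> ->. Qed.

Lemma Phi_bnd (R : realType) (z : R) : 0 <= std_Phi z <= 1.
Proof.
rewrite /std_Phi; apply: fine01; first exact: measure_ge0.
exact: probability_le1.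
Qed.

Lemma phi_eq (R : realType) (z : R) :
  std_phi z = (Num.sqrt (pi *+ 2))^-1 * expR (- z ^+ 2 / 2).
Proof.
rewrite /std_phi normal_pdfE ?oner_neq0 //.
rewrite /normal_peak /normal_fun expr1n mul1r subr0 /=.
by [].
Qed.

Lemma sqrt2pi_ge1 (R : realType) : 1 <= Num.sqrt (pi *+ 2 : R).
Proof.
rewrite -sqrtr1 ler_sqrt; last by rewrite mulrn_wge0 // pi_ge0.
have := @pi_ge2 R; rewrite mulr2n; lra.
Qed.

Lemma phi_bnd (R : realType) (w : R) : 0 <= std_phi w <= 1.
Proof.
rewrite phi_eq; apply/andP; split.
  by rewrite mulr_ge0 ?expR_ge0 // invr_ge0 sqrtr_ge0.
rewrite -[1]mul1r; apply: ler_pM.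
- by rewrite invr_ge0 sqrtr_ge0.
- exact: expR_ge0.
- by rewrite invf_le1 ?sqrt2pi_ge1 // (lt_le_trans ltr01 (sqrt2pi_ge1 R)).
- by rewrite expR_le1; apply: mulr_le0_ge0; rewrite ?oppr_le0 ?sqr_ge0 ?invr_ge0 ?ler0n.
Qed.

Lemma tau_le_phi (R : realType) (w : R) : w <= 0 -> tau w <= std_phi w.
Proof.
move=> hw; rewrite /tau; have /andP[h0 h1] := @Phi_bnd _ w.
have : w * std_Phi w <= 0 by rewrite mulr_le0_ge0.
lra.
Qed.

Lemma key (R : realType) (w s kappa : R) : w <= 0 -> 0 < s -> s <= 1 -> 0 < kappa ->
  kappa <= s * tau w -> w ^+ 2 <= ln (1 / (2 * pi * kappa ^+ 2)).
Proof.
move=> hw hs hs1 hk hle.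
have /andP[p0 p1] := @phi_bnd _ w.
have hkp : kappa <= std_phi w.
  apply: (le_trans hle); apply: (le_trans (y := s * std_phi w)).
    by rewrite ler_pM2l // tau_le_phi.
  by rewrite -[X in _ <= X]mul1r ler_wpM2r.
move: hkp; rewrite phi_eq.
set P := Num.sqrt (pi *+ 2 : R).
have P1 : 1 <= P by exact: sqrt2pi_ge1.
have P0 : 0 < P by apply: lt_le_trans P1.
have PP : P ^+ 2 = 2 * pi.
  rewrite sqr_sqrtr; first by rewrite mulr2n; lra.
  by rewrite mulrn_wge0 // pi_ge0.
set E := expR _ => hkE.
have hkE' : kappa * P <= E.
  move: hkE; rewrite -(ler_pM2r P0) => h; apply: (le_trans h).
  by rewrite mulrC mulrA mulfV ?gt_eqF // mul1r.
have E2 : E ^+ 2 = expR (- w ^+ 2).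
  by rewrite /E -expRM_natr; congr expR; lra.
have h2 : 2 * pi * kappa ^+ 2 <= expR (- w ^+ 2).
  have hkP0 : 0 <= kappa * P by rewrite mulr_ge0 // ltW.
  have : (kappa * P) ^+ 2 <= E ^+ 2 by rewrite !expr2 ler_pM.
  by rewrite exprMn PP E2 mulrC.
have pos : 0 < 2 * pi * kappa ^+ 2 by rewrite !mulr_gt0 ?pi_gt0 ?exprn_gt0.
rewrite div1r lnV ?posrE // lerNr.
rewrite -(expRK (- w ^+ 2)) ler_ln ?posrE ?expR_gt0 //.
Qed.

Theorem lemma3 (R : realType) (X : Type) (n : nat) (y : 'I_(n.+1) -> R)
    (mu sigma : X -> R) (xnew : X) (kappa : R)
    (hsig_pos : forall x, 0 < sigma x)
    (hsig_le1 : forall x, sigma x <= 1)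
    (hkappa : 0 < kappa)
    (hEI : kappa <= EI mu sigma (ystar y) xnew) :
  let C := ln (1 / (2 * pi * kappa ^+ 2)) in
  (0 <= ystar y - mu xnew ->
     ystar y - mu xnew <= sigma xnew * Num.sqrt C) /\
  tau (- zscore mu sigma (ystar y) xnew) <= 1 + Num.sqrt C.
Proof.
move=> C.
have hs := hsig_pos xnew; have hs1 := hsig_le1 xnew.
move: hEI; rewrite /EI.
set s := sigma xnew; set z := zscore _ _ _ _ => hEI.
have zE : z = - (ystar y - mu xnew) / s by rewrite /z /zscore opprB.
have hw : z <= 0 -> - z <= Num.sqrt C.
  move=> hz; have hC := @key _ _ _ _ hz hs hs1 hkappa hEI; rewrite -/C in hC.
  have C0 : 0 <= C by apply: le_trans hC; exact: sqr_ge0.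
  have : Num.sqrt (z ^+ 2) <= Num.sqrt C by rewrite ler_sqrt.
  by rewrite sqrtr_sqr ler0_norm.
have sC0 := sqrtr_ge0 C.
split.
  move=> hd.
  have hz : z <= 0 by rewrite zE mulNr oppr_le0 divr_ge0 // ltW.
  have := hw hz; by rewrite zE mulNr opprK ler_pdivrMr // mulrC.
have [hz|hz] := leP z 0.
  have h := hw hz.
  have /andP[p0 p1] := @phi_bnd _ (- z).
  have /andP[q0 q1] := @Phi_bnd _ (- z).
  rewrite /tau.
  have : - z * std_Phi (- z) <= - z by rewrite ler_piMr // oppr_ge0.
  lra.
have /andP[p0 p1] := @phi_bnd _ (- z).
have hz' : - z <= 0 by rewrite oppr_le0 ltW.
have := @tau_le_phi _ _ hz'.
lra.
Qed.
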